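(* Let $D$ be a tournament, $T\subseteq V(D)$ and $k\in\mathbb{N}$. Then $D$ has a $T$-feedback arc set of size at most $k$ if and only if there exists an order $\sigma$ of $V(D)$ with $\mathrm{cost}(\sigma)\le k$.
   Context: A tournament is a digraph with exactly one arc between every pair of distinct vertices. Given a terminal set $T\subseteq V(D)$, a $T$-cycle is a directed cycle containing at least one vertex of $T$. A $T$-feedback arc set is a set $S\subseteq A(D)$ such that $D-S$ (same vertex set, arcs $A(D)\setminus S$) contains no $T$-cycle. For an order $\sigma=(v_1,\dots,v_n)$ of $V(D)$, an arc $v_iv_j$ is forward if $i<j$ and backward if $i>j$. The span of a backward arc $v_rv_l$ ($r>l$) is the interval $[v_l,v_r]=\{v_i: l\le i\le r\}$, and the arc is said to be above every vertex of its span. A backward arc above at least one terminal is called affected, and $\mathrm{cost}(\sigma)$ is the number of affected arcs with respect to $\sigma$. *)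

(* Defs.v *)
From mathcomp Require Import all_boot.
Set Implicit Arguments. Unset Strict Implicit. Unset Printing Implicit Defensive.

Section Tournaments.
Variables (V : finType) (E : rel V).

Definition tournament : Prop :=
  (forall u, ~~ E u u) /\
  (forall u v, u != v -> (E u v (+) E v u)).

Definition arcs : {set V * V} := [set a | E a.1 a.2].

Definition directed_cycle (R : rel V) (c : seq V) : bool :=
  [&& c != [::], uniq c & cycle R c].

Definition del_arcs (S : {set V * V}) : rel V :=
  fun u v => E u v && ((u, v) \notin S).

Definition T_cycle (T : {set V}) (R : rel V) (c : seq V) : Prop :=
  directed_cycle R c /\ has (fun x => x \in T) c.

Definition T_feedback_arc_set (T : {set V}) (S : {set V * V}) : Prop :=
  S \subset arcs /\ forall c, ~ T_cycle T (del_arcs S) c.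

(* an order of V: a duplicate-free enumeration of all vertices;
   position of x is index x s *)
Definition is_order (s : seq V) : bool := perm_eq s (enum V).

Definition backward (s : seq V) (a : V * V) : bool :=
  index a.2 s < index a.1 s.

Definition in_span (s : seq V) (a : V * V) (x : V) : bool :=
  (index a.2 s <= index x s) && (index x s <= index a.1 s).

Definition affected (T : {set V}) (s : seq V) (a : V * V) : bool :=
  backward s a && [exists t in T, in_span s a t].

Definition cost (T : {set V}) (s : seq V) : nat :=
  #|[set a in arcs | affected T s a]|.

End Tournaments.

(* Main.v *)
Require Import Defs.
From mathcomp Require Import all_boot.
From mathcomp Require Import zify.

Lemma tcyc (V : finType) (R : rel V) (T : {set V}) t x :
  t \in T -> t != x -> connect R t x -> connect R x t -> exists c, T_cycle T R c.
Proof.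
move=> tT ntx /connectP [p pth ex] cxt.
case: p pth ex => [|y p] /= pth ex; first by rewrite ex eqxx in ntx.
case/andP: pth => Rty pth.
have cyt : connect R y t.
  apply: connect_trans cxt; apply/connectP; by exists p.
case/connectP: cyt => q qp.
case: (shortenP qp) => q' q'p uq _ qt.
exists (y :: q'); split; last first.
  apply/hasP; exists t => //; rewrite qt; exact: mem_last.
by rewrite /directed_cycle uq /= rcons_path q'p -qt Rty.
Qed.

Lemma path_up (V : finType) (R : rel V) (f : V -> nat) t :
  (forall u v, R u v -> f t <= f u -> f t < f v) ->
  forall l x, f t <= f x -> path R x l -> l != [::] -> f t < f (last x l).
Proof.
move=> step; elim=> [|y l IH] x //= tx /andP [Rxy pl] _.
have ty := step _ _ Rxy tx.
case: l IH pl => [|z l] IH pl //=.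
exact: (IH y (ltnW ty) pl).
Qed.

Theorem proposition1 (V : finType) (E : rel V) (T : {set V}) (k : nat) :
  tournament E ->
  (exists S : {set V * V}, T_feedback_arc_set E T S /\ #|S| <= k) <->
  (exists s : seq V, is_order s /\ cost E T s <= k).
Proof.
move=> [noloop _]; split.
- move=> [S [[Ssub nocyc] Sk]].
  pose R := del_arcs E S.
  pose anc x := #|[set y | connect R y x]|.
  pose scc x := [set y | connect R x y && connect R y x].
  pose N := #|{set V}|.
  pose r x := nat_of_ord (enum_rank (scc x)).
  pose K x := anc x * N + r x.
  have rN x : r x < N by exact: ltn_ord.
  have mutual x y : connect R x y -> connect R y x -> scc x = scc y.
    move=> cxy cyx; apply/setP => z; rewrite !inE.
    apply/andP/andP => [[h1 h2]|[h1 h2]]; split.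
    - exact: connect_trans cyx h1.
    - exact: connect_trans h2 cxy.
    - exact: connect_trans cxy h1.
    - exact: connect_trans h2 cyx.
  have Kmono u v : R u v -> K u <= K v.
    move=> Ruv.
    have sub : [set y | connect R y u] \subset [set y | connect R y v].
      apply/subsetP => y; rewrite !inE => h; exact: connect_trans h (connect1 Ruv).
    case: (ltnP (anc u) (anc v)) => h.
      rewrite /K; have := rN u; have := rN v; nia.
    have eq : [set y | connect R y u] = [set y | connect R y v].
      by apply/eqP; rewrite eqEcard sub h.
    have cvu : connect R v u.
      have : v \in [set y | connect R y v] by rewrite inE connect0.
      by rewrite -eq inE.
    by rewrite /K /r /anc (mutual u v (connect1 Ruv) cvu) eq.
  have Keq t x : K t = K x -> connect R t x && connect R x t.
    move=> e.
    have e' : scc t = scc x.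
      apply: enum_rank_inj; apply: val_inj.
      have := congr1 (modn^~ N) e; rewrite /= /K !modnMDl !modn_small //.
    have : x \in scc x by rewrite inE connect0.
    by rewrite -e' inE.
  pose leK := fun x y => K x <= K y.
  pose s := sort leK (enum V).
  have sorted_s : sorted leK s by apply: sort_sorted => x y; exact: leq_total.
  have mem_s x : x \in s by rewrite mem_sort mem_enum.
  have Kidx x y : index x s <= index y s -> K x <= K y.
    move=> le.
    have := @sorted_leq_nth _ leK (fun a b c => @leq_trans (K a) (K b) (K c)) (fun z => leqnn _) x s sorted_s (index x s) (index y s).
    rewrite !nth_index //; apply; rewrite ?inE ?index_mem //.
  exists s; split; first by rewrite /is_order perm_sort perm_refl.
  apply: leq_trans (subset_leq_card _) Sk.
  apply/subsetP => -[u v]; rewrite inE /arcs inE /= => /andP [Euv /andP [bw /existsP [t /andP [tT sp]]]].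
  apply: contraT => nS.
  have Ruv : R u v by rewrite /R /del_arcs Euv nS.
  move: bw sp; rewrite /backward /in_span /= => bw /andP [vt tu].
  have e1 := Kidx _ _ vt.
  have e2 := Kidx _ _ tu.
  have e3 := Kmono _ _ Ruv.
  have Ktu : K t = K u by lia.
  have Ktv : K t = K v by lia.
  have nuv : u != v by apply/eqP => euv; subst v; move: (noloop u); rewrite Euv.
  case: (eqVneq t u) => [etu|ntu].
    subst t; case/andP: (Keq _ _ Ktv) => c1 c2.
    by case: (tcyc _ _ _ _ _ tT nuv c1 c2) => c /nocyc.
  case/andP: (Keq _ _ Ktu) => c1 c2.
  by case: (tcyc _ _ _ _ _ tT ntu c1 c2) => c /nocyc.
- move=> [s [so ck]].
  pose S := [set a in arcs E | affected T s a].
  exists S; split => //; split.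
    by apply/subsetP => a; rewrite inE => /andP [].
  have memS x : x \in s by rewrite (perm_mem so) mem_enum.
  move=> c [/andP [cn /andP [uc cyc]] hc].
  case/hasP: hc => t tc tT.
  pose R := del_arcs E S.
  have step u v : R u v -> index t s <= index u s -> index t s < index v s.
    move=> /andP [Euv nS] tu.
    have nuv : u != v by apply/eqP => euv; subst v; move: (noloop u); rewrite Euv.
    case: (ltngtP (index u s) (index v s)) => h.
    - exact: leq_ltn_trans tu h.
    - rewrite inE /arcs inE /= Euv /affected /backward /= h /= in nS.
      have : ~~ in_span s (u, v) t.
        by apply: contra nS => hh; apply/existsP; exists t; rewrite tT.
      by rewrite /in_span /= tu andbT -ltnNge.
    - by move: nuv; rewrite (index_inj u (memS u) (memS v) h) eqxx.
  case: (rot_to tc) => i c' ec.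
  have : cycle R (t :: c') by rewrite -ec rot_cycle.
  rewrite /= => pth.
  have := path_up _ _ _ _ step _ _ (leqnn _) pth.
  have ne : rcons c' t != [::] by case: (c').
  by rewrite last_rcons ltnn => /(_ ne).
Qed.
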